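(* Let $d\ge1$ and let $f$ be a Boolean function that is equivalent to a depth-$d$ decision tree and satisfies ${\rm psize}(f)=t\ge1$. Then some variable $x_i$ appears in at least $\lceil t/d\rceil$ monomials of the minimal polynomial representation of $f$.
   Context: Every Boolean function has a unique representation as a sum over $\mathbb{F}_2$ of distinct monomials (products of distinct variables, the empty product being the constant $1$). ${\rm psize}(f)$ is the number of non-constant monomials in this representation. A decision tree over $x_1,\dots,x_n$ is a rooted binary tree whose internal nodes are labeled by variables, each having a 0-child and a 1-child, leaves labeled $0$ or $1$; it computes a Boolean function by following from the root the $x_i$-child at a node labeled $x_i$; depth is the maximum number of edges on a root-to-leaf path. *)

(* Defs.v *)
From mathcomp Require Import all_boot.
Set Implicit Arguments. Unset Strict Implicit. Unset Printing Implicit Defensive.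

(* Boolean functions on n variables x_0..x_{n-1}; an assignment is the set of
   variables set to 1. *)
Definition assignment (n : nat) := {set 'I_n}.

(* A polynomial over F_2 with distinct multilinear monomials is a set of
   monomials, each monomial being the set of its variables (set0 = constant 1). *)
Definition f2poly (n : nat) := {set {set 'I_n}}.

Definition peval n (P : f2poly n) (x : assignment n) : bool :=
  odd #|[set S in P | S \subset x]|.

Definition represents n (P : f2poly n) (f : assignment n -> bool) : Prop :=
  forall x, peval P x = f x.

Definition psize_of n (P : f2poly n) : nat := #|P :\ set0|.

Inductive dtree (n : nat) : Type :=
| Leaf : bool -> dtree n
| Node : 'I_n -> dtree n -> dtree n -> dtree n. (* variable, 0-child, 1-child *)

Fixpoint dt_eval n (T : dtree n) (x : assignment n) : bool :=
  match T with
  | Leaf b => b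
  | Node i T0 T1 => if i \in x then dt_eval T1 x else dt_eval T0 x
  end.

Fixpoint dt_depth n (T : dtree n) : nat :=
  match T with
  | Leaf _ => 0
  | Node _ T0 T1 => (maxn (dt_depth T0) (dt_depth T1)).+1
  end.

(* Main.v *)
Require Import Defs.
From mathcomp Require Import all_boot.
From mathcomp Require Import zify.
Set Implicit Arguments. Unset Strict Implicit.

Fixpoint zpath n (T : dtree n) : seq 'I_n :=
  match T with
  | Leaf _ => [::]
  | Node i T0 _ => i :: zpath T0
  end.

Lemma zpath_size n (T : dtree n) : size (zpath T) <= dt_depth T.
Proof.
elim: T => [b|i T0 IH0 T1 IH1] //=.
by rewrite ltnS (leq_trans IH0) // leq_maxl.
Qed.

Lemma zpath_const n (T : dtree n) (x : assignment n) :
  all (fun i => i \notin x) (zpath T) -> dt_eval T x = dt_eval T set0.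
Proof.
elim: T => [b|i T0 IH0 T1 IH1] //= /andP [Hi Ha].
by rewrite (negbTE Hi) in_set0 IH0.
Qed.

Lemma key n (T : dtree n) (P : f2poly n) :
  represents P (dt_eval T) ->
  forall S, S \in P -> S != set0 -> has (fun j => j \in S) (zpath T).
Proof.
move=> Hrep S HS HS0; apply/negPn/negP => Hh.
pose pr := fun S : {set 'I_n} => [&& S \in P, S != set0 & all (fun i => i \notin S) (zpath T)].
have prS : pr S by rewrite /pr HS HS0 /= all_predC.
case: (arg_minnP (fun S : {set 'I_n} => #|S|) prS) => S0 /and3P [HS0P HS00 HS0a] Hmin.
have E1 : [set S in P | S \subset S0] = S0 |: [set S in P | S == set0].
  apply/setP => U; rewrite !inE; apply/idP/idP.
  - move=> /andP [UP US].
    case: (eqVneq U set0) => [E|U0]; first by subst U; rewrite UP orbT.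
    have : pr U.
      rewrite /pr UP U0 /=; apply/allP => i Hi.
      apply/negP => iU; move/allP: HS0a => /(_ i Hi) /negP; apply.
      exact: (subsetP US).
    move=> /Hmin HU; rewrite andbF orbF.
    by rewrite eqEcard US HU.
  - by case/orP => [/eqP ->|/andP [-> /eqP ->]]; rewrite ?HS0P ?subxx ?sub0set.
have E2 : [set S in P | S \subset set0] = [set S in P | S == set0].
  by apply/setP => U; rewrite !inE subset0.
have H1 := Hrep S0; have H2 := Hrep set0.
rewrite (zpath_const HS0a) -H2 /peval E1 E2 cardsU1 in H1.
have : S0 \notin [set S in P | S == set0] by rewrite inE (negbTE HS00) andbF.
move=> Hn; rewrite Hn /= in H1.
by case: (odd _) H1.
Qed.

Lemma union_bound n (Q : {set {set 'I_n}}) (A : 'I_n -> {set {set 'I_n}}) (s : seq 'I_n) :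
  (forall S, S \in Q -> exists2 j, j \in s & S \in A j) ->
  #|Q| <= \sum_(j <- s) #|A j|.
Proof.
elim: s Q => [|a s IH] Q HQ.
  rewrite big_nil leqn0 cards_eq0; apply/eqP/setP => S; rewrite inE.
  by apply/negP => /HQ [j].
rewrite big_cons.
have -> : Q = (Q :&: A a) :|: (Q :\: A a) by rewrite setID.
apply: leq_trans (leq_card_setU _ _) _.
apply: leq_add; first by apply: subset_leq_card; apply: subsetIr.
apply: IH => S; rewrite inE => /andP [Sa SQ].
case: (HQ S SQ) => j; rewrite inE => /orP [/eqP ->|js] Sj.
  by rewrite Sj in Sa.
by exists j.
Qed.

Lemma seq_max n (F : 'I_n -> nat) (s : seq 'I_n) :
  s != [::] -> exists2 i, i \in s & forall j, j \in s -> F j <= F i.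
Proof.
elim: s => [|a s IH] // _.
case: (eqVneq s [::]) => [->|sn].
  by exists a; rewrite ?inE // => j; rewrite inE => /eqP ->.
case: (IH sn) => i iin Hi.
case: (leqP (F a) (F i)) => Hai.
  exists i; first by rewrite inE iin orbT.
  by move=> j; rewrite inE => /orP [/eqP ->|/Hi].
exists a; first by rewrite inE eqxx.
move=> j; rewrite inE => /orP [/eqP ->|/Hi H] //.
exact: leq_trans H (ltnW Hai).
Qed.

Lemma sum_le n (F : 'I_n -> nat) (s : seq 'I_n) m :
  (forall j, j \in s -> F j <= m) -> \sum_(j <- s) F j <= size s * m.
Proof.
elim: s => [|a s IH] H; first by rewrite big_nil.
rewrite big_cons /= mulSn leq_add ?H ?inE ?eqxx //.
by apply: IH => j js; apply: H; rewrite inE js orbT.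
Qed.

Theorem mainTheorem19 (n d t : nat) (f : assignment n -> bool)
    (T : dtree n) (P : f2poly n) :
  1 <= d ->
  dt_depth T = d ->
  (forall x, dt_eval T x = f x) ->
  represents P f ->
  psize_of P = t -> 1 <= t ->
  exists i : 'I_n, (t + d - 1) %/ d <= #|[set S in P | i \in S]|.
Proof.
move=> Hd Hdep Hf Hrep Ht Ht1.
have Hrep' : represents P (dt_eval T) by move=> x; rewrite Hf.
pose A := fun i : 'I_n => [set S in P | i \in S].
have Hcov : forall S, S \in P :\ set0 -> exists2 j, j \in zpath T & S \in A j.
  move=> S; rewrite !inE => /andP [S0 SP].
  have /hasP [j js jS] := key Hrep' SP S0.
  by exists j => //; rewrite inE SP jS.
have Hub := union_bound Hcov.
have sn : zpath T != [::].
  apply/negP => /eqP E; rewrite E big_nil in Hub.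
  by move: Hub; rewrite -/(psize_of P) Ht leqn0 => /eqP E'; rewrite E' in Ht1.
case: (seq_max (fun j => #|A j|) sn) => i _ Hi.
exists i.
have := leq_trans Hub (sum_le Hi).
rewrite -/(psize_of P) Ht => Hle.
have Hs := zpath_size T; rewrite Hdep in Hs.
have Hle2 : t <= d * #|A i| by rewrite (leq_trans Hle) // leq_mul2r Hs orbT.
rewrite -/(A i).
apply: contraLR Hle2; rewrite -!ltnNge => H.
have : #|A i|.+1 * d <= t + d - 1.
  by rewrite -(leq_pmul2r Hd) in H; apply: leq_trans H (leq_trunc_div _ _).
lia.
Qed.
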